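(* Let $(\beta_{\rm sd},\beta_{\rm rd},\beta_{\rm sr})\in\mathbb{R}_+^3$ with $\beta_{\rm rd},\beta_{\rm sr}>0$ (or more generally $C,I>0$), and set $S=\mathsf{SNR}^{\beta_{\rm sd}}$, $I=\mathsf{SNR}^{\beta_{\rm rd}}$, $C=\mathsf{SNR}^{\beta_{\rm sr}}$. Then the NNC rate with deterministic switch $r^{\rm(NNC,det)}$ satisfies $$\liminf_{\mathsf{SNR}\to\infty}\frac{r^{\rm(NNC,det)}}{\log(1+\mathsf{SNR})}\ge\beta_{\rm sd}+\frac{[\beta_{\rm rd}-\beta_{\rm sd}]^+[\beta_{\rm sr}-\beta_{\rm sd}]^+}{[\beta_{\rm rd}-\beta_{\rm sd}]^++[\beta_{\rm sr}-\beta_{\rm sd}]^+}$$ (fraction read as $0$ when its denominator vanishes), i.e. NNC with deterministic switch achieves the gDoF of the G-HD-RC.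
   Context: $r^{\rm(NNC,det)}:=\sup_{\gamma\in(0,1),\beta\in[0,1],\sigma_0^2>0}\min\{\gamma I_9+(1-\gamma)I_{10},\gamma I_{11}+(1-\gamma)I_{12}\}$ with $P_{s,0}=\beta/\gamma$, $P_{s,1}=(1-\beta)/(1-\gamma)$, $P_{r,1}=1/(1-\gamma)$, $I_9=\log(1+SP_{s,0})-\log(1+1/\sigma_0^2)$, $I_{10}=\log(1+SP_{s,1}+IP_{r,1})$, $I_{11}=\log(1+SP_{s,0}+\frac{C}{1+\sigma_0^2}P_{s,0})$, $I_{12}=\log(1+SP_{s,1})$; it is an achievable rate for the Gaussian half-duplex relay channel $Y_r=\sqrt{C}X_s(1-S_r)+Z_r$, $Y_d=\sqrt S X_s+e^{j\theta}\sqrt I X_rS_r+Z_d$ (unit power constraints, unit-variance independent complex Gaussian noises, relay state $S_r\in\{0,1\}$). $[x]^+=\max\{x,0\}$; logs base 2. *)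

(* Defs.v *)
From Stdlib Require Import Reals Lra.
Open Scope R_scope.

Definition log2 (x : R) : R := ln x / ln 2.

Definition pos_part (x : R) : R := Rmax x 0.

Definition frac0 (a b : R) : R := if Req_EM_T b 0 then 0 else a / b.

Definition gainS (SNR bsd : R) : R := Rpower SNR bsd.
Definition gainI (SNR brd : R) : R := Rpower SNR brd.
Definition gainC (SNR bsr : R) : R := Rpower SNR bsr.

(* The objective min{gamma I9 + (1-gamma) I10, gamma I11 + (1-gamma) I12}
   of the NNC-with-deterministic-switch rate, for gains S, I, C and
   parameters gamma, beta, sigma0^2 (= s2). *)
Definition NNC_det_obj (S I C gamma beta s2 : R) : R :=
  let Ps0 := beta / gamma in
  let Ps1 := (1 - beta) / (1 - gamma) in
  let Pr1 := 1 / (1 - gamma) in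
  let I9  := log2 (1 + S * Ps0) - log2 (1 + 1 / s2) in
  let I10 := log2 (1 + S * Ps1 + I * Pr1) in
  let I11 := log2 (1 + S * Ps0 + C / (1 + s2) * Ps0) in
  let I12 := log2 (1 + S * Ps1) in
  Rmin (gamma * I9 + (1 - gamma) * I10) (gamma * I11 + (1 - gamma) * I12).

(* The set of values over which r^(NNC,det) is the supremum:
   r^(NNC,det)(S,I,C) = sup { NNC_det_obj S I C gamma beta s2 |
                              gamma in (0,1), beta in [0,1], s2 > 0 }. *)
Definition NNC_det_vals (S I C v : R) : Prop :=
  exists gamma beta s2 : R,
    0 < gamma < 1 /\ 0 <= beta <= 1 /\ 0 < s2 /\
    v = NNC_det_obj S I C gamma beta s2.

Definition gdof (bsd brd bsr : R) : R :=
  bsd + frac0 (pos_part (brd - bsd) * pos_part (bsr - bsd))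
              (pos_part (brd - bsd) + pos_part (bsr - bsd)).

(* liminf_{SNR -> oo} (sup V(SNR)) / log2(1+SNR) >= d, unfolded:
   for every eps > 0, for all sufficiently large SNR, the supremum of V(SNR)
   exceeds (d - eps) log2(1+SNR), i.e. some element of V(SNR) does. *)
Definition liminf_sup_ratio_ge (V : R -> R -> Prop) (d : R) : Prop :=
  forall eps : R, 0 < eps ->
    exists M : R, forall SNR : R, M < SNR ->
      exists v : R, V SNR v /\ v / log2 (1 + SNR) >= d - eps.

(* Main.v *)
Require Import Defs.
From Stdlib Require Import Reals.
From Stdlib Require Import Lra Psatz.
Open Scope R_scope.

Lemma ln2_pos : 0 < ln 2.
Proof. pose proof ln_lt_2; lra. Qed.

Lemma log2_le a b : 0 < a -> a <= b -> log2 a <= log2 b.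
Proof.
  intros Ha Hab. unfold log2, Rdiv. apply Rmult_le_compat_r.
  - left; apply Rinv_0_lt_compat, ln2_pos.
  - destruct Hab as [H|H]; [left; apply ln_increasing; auto | subst; lra].
Qed.

Lemma log2_pow x b : 0 < x -> log2 (Rpower x b) = b * log2 x.
Proof. intros Hx. unfold log2, Rpower. rewrite ln_exp. field. pose proof ln2_pos; lra. Qed.

Lemma log2_half y : 0 < y -> log2 (y / 2) = log2 y - 1.
Proof.
  intros Hy. unfold log2. replace (y / 2) with (y * / 2) by reflexivity. rewrite ln_mult; [|lra|].
  - rewrite ln_Rinv; [|lra]. field. pose proof ln2_pos; lra.
  - apply Rinv_0_lt_compat; lra.
Qed.

Lemma log2_2 : log2 2 = 1.
Proof. unfold log2. field. pose proof ln2_pos; lra. Qed.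

Lemma log2_pos x : 1 < x -> 0 < log2 x.
Proof.
  intros Hx. unfold log2. apply Rdiv_lt_0_compat; [|apply ln2_pos].
  rewrite <- ln_1. apply ln_increasing; lra.
Qed.

Lemma pos_part_ge0 x : 0 <= pos_part x.
Proof. unfold pos_part. apply Rmax_r. Qed.

Lemma obj_bound x bsd brd bsr g f :
  1 < x -> 0 <= bsd -> 0 < g < 1 ->
  f <= (1 - g) * pos_part (brd - bsd) -> f <= g * pos_part (bsr - bsd) ->
  NNC_det_obj (gainS x bsd) (gainI x brd) (gainC x bsr) g g 1
    >= (bsd + f) * log2 x - 1.
Proof.
  intros Hx Hb Hg Hfa Hfc.
  unfold NNC_det_obj, gainS, gainI, gainC. cbv zeta.
  set (S := Rpower x bsd). set (I := Rpower x brd). set (C := Rpower x bsr).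
  set (l := log2 x).
  assert (HS : 0 < S) by (unfold S, Rpower; apply exp_pos).
  assert (HI : 0 < I) by (unfold I, Rpower; apply exp_pos).
  assert (HC : 0 < C) by (unfold C, Rpower; apply exp_pos).
  assert (lS : log2 S = bsd * l) by (apply log2_pow; lra).
  assert (lI : log2 I = brd * l) by (apply log2_pow; lra).
  assert (lC : log2 C = bsr * l) by (apply log2_pow; lra).
  assert (Hl : 0 < l) by (apply log2_pos; auto).
  replace (g / g) with 1 by (field; lra).
  replace ((1 - g) / (1 - g)) with 1 by (field; lra).
  replace (1 + 1 / 1) with 2 by field.
  replace (1 + 1) with 2 by field.
  rewrite log2_2.
  assert (Hinv : 1 <= 1 / (1 - g)).
  { unfold Rdiv; rewrite Rmult_1_l. rewrite <- Rinv_1 at 1.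
    apply Rinv_le_contravar; lra. }
  assert (h9 : log2 (1 + S * 1) >= bsd * l).
  { rewrite <- lS. apply Rle_ge, log2_le; lra. }
  assert (h10a : log2 (1 + S * 1 + I * (1 / (1 - g))) >= bsd * l).
  { rewrite <- lS. apply Rle_ge, log2_le; [lra|]. nra. }
  assert (h10b : log2 (1 + S * 1 + I * (1 / (1 - g))) >= brd * l).
  { rewrite <- lI. apply Rle_ge, log2_le; [lra|]. nra. }
  assert (h11a : log2 (1 + S * 1 + C / 2 * 1) >= bsd * l).
  { rewrite <- lS. apply Rle_ge, log2_le; [lra|]. lra. }
  assert (h11b : log2 (1 + S * 1 + C / 2 * 1) >= bsr * l - 1).
  { rewrite <- lC, <- log2_half by lra. apply Rle_ge, log2_le; lra. }
  set (I9 := log2 (1 + S * 1)) in *.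
  set (I10 := log2 (1 + S * 1 + I * (1 / (1 - g)))) in *.
  set (I11 := log2 (1 + S * 1 + C / 2 * 1)) in *.
  assert (Ha : pos_part (brd - bsd) * l <= I10 - bsd * l).
  { unfold pos_part. destruct (Rle_dec (brd - bsd) 0).
    - rewrite Rmax_right by lra. lra.
    - rewrite Rmax_left by lra. nra. }
  assert (Hc : pos_part (bsr - bsd) * l <= I11 - bsd * l + 1).
  { unfold pos_part. destruct (Rle_dec (bsr - bsd) 0).
    - rewrite Rmax_right by lra. lra.
    - rewrite Rmax_left by lra. nra. }
  set (a := pos_part (brd - bsd)) in *. set (c := pos_part (bsr - bsd)) in *.
  assert (f * l <= (1 - g) * a * l) by (apply Rmult_le_compat_r; lra).
  assert (f * l <= g * c * l) by (apply Rmult_le_compat_r; lra).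
  assert (g * (I9 - 1) >= g * (bsd * l - 1)) by (apply Rle_ge, Rmult_le_compat_l; lra).
  assert ((1 - g) * I10 >= (1 - g) * (bsd * l + a * l)) by (apply Rle_ge, Rmult_le_compat_l; lra).
  assert (g * I11 >= g * (bsd * l + c * l - 1)) by (apply Rle_ge, Rmult_le_compat_l; lra).
  assert ((1 - g) * I9 >= (1 - g) * (bsd * l)) by (apply Rle_ge, Rmult_le_compat_l; lra).
  apply Rle_ge, Rmin_glb.
  - nra.
  - nra.
Qed.

Lemma choose_g a c : 0 <= a -> 0 <= c ->
  exists g, 0 < g < 1 /\ 0 <= frac0 (a * c) (a + c) /\
    frac0 (a * c) (a + c) <= (1 - g) * a /\ frac0 (a * c) (a + c) <= g * c.
Proof.
  intros Ha Hc. unfold frac0.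
  destruct (Rlt_dec 0 a) as [Ha'|Ha']; destruct (Rlt_dec 0 c) as [Hc'|Hc'].
  - exists (a / (a + c)).
    destruct (Req_EM_T (a + c) 0) as [E|E]; [lra|].
    split; [split|split; [|split]].
    + apply Rdiv_lt_0_compat; lra.
    + apply (Rmult_lt_reg_r (a + c)); [lra|]. field_simplify; lra.
    + apply Rle_trans with (0 * 0); [lra|]. unfold Rdiv.
      rewrite Rmult_0_l. apply Rmult_le_pos; [nra|left; apply Rinv_0_lt_compat; lra].
    + right; field; lra.
    + right; field; lra.
  - exists (1/2). assert (c = 0) by lra. subst.
    destruct (Req_EM_T (a + 0) 0); [lra|].
    rewrite Rmult_0_r. unfold Rdiv; rewrite Rmult_0_l. lra.
  - exists (1/2). assert (a = 0) by lra. subst.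
    destruct (Req_EM_T (0 + c) 0); [lra|].
    rewrite Rmult_0_l. unfold Rdiv; rewrite Rmult_0_l. lra.
  - exists (1/2). assert (a = 0) by lra. subst.
    destruct (Req_EM_T (0 + c) 0); [lra|].
    rewrite Rmult_0_l. unfold Rdiv; rewrite Rmult_0_l. lra.
Qed.

Theorem proposition13 (bsd brd bsr : R) :
  0 <= bsd -> 0 < brd -> 0 < bsr ->
  liminf_sup_ratio_ge
    (fun SNR v => NNC_det_vals (gainS SNR bsd) (gainI SNR brd) (gainC SNR bsr) v)
    (gdof bsd brd bsr).
Proof.
  intros Hb _ _ eps Heps.
  destruct (choose_g (pos_part (brd - bsd)) (pos_part (bsr - bsd)))
    as [g [Hg [Hf0 [Hfa Hfc]]]]; try apply pos_part_ge0.
  set (f := frac0 (pos_part (brd - bsd) * pos_part (bsr - bsd))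
                  (pos_part (brd - bsd) + pos_part (bsr - bsd))) in *.
  set (d := gdof bsd brd bsr).
  assert (Hd : d = bsd + f) by reflexivity.
  set (K := (d + 1) / eps).
  exists (Rmax 1 (exp (K * ln 2))).
  intros x Hx.
  assert (Hx1 : 1 < x) by (pose proof (Rmax_l 1 (exp (K * ln 2))); lra).
  assert (Hx2 : exp (K * ln 2) < 1 + x)
    by (pose proof (Rmax_r 1 (exp (K * ln 2))); lra).
  pose proof ln2_pos as Hln2.
  exists (NNC_det_obj (gainS x bsd) (gainI x brd) (gainC x bsr) g g 1).
  split.
  { exists g, g, 1. repeat split; try lra; reflexivity. }
  pose proof (obj_bound x bsd brd bsr g f Hx1 Hb Hg Hfa Hfc) as Hv.
  set (v := NNC_det_obj _ _ _ g g 1) in *.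
  set (L := log2 (1 + x)).
  set (l := log2 x) in *.
  assert (HLK : K < L).
  { unfold L, log2. apply (Rmult_lt_reg_r (ln 2)); [lra|].
    unfold Rdiv. rewrite Rmult_assoc, Rinv_l, Rmult_1_r by lra.
    rewrite <- (ln_exp (K * ln 2)). apply ln_increasing; [apply exp_pos|lra]. }
  assert (HLl : L <= l + 1).
  { assert (Hm : log2 (x * 2) = l + 1).
    { unfold l, log2. rewrite ln_mult by lra. field. lra. }
    rewrite <- Hm. apply log2_le; lra. }
  assert (Hl : 0 < l) by (apply log2_pos; auto).
  assert (Hd0 : 0 <= d) by lra.
  assert (HK0 : 0 < K) by (unfold K; apply Rdiv_lt_0_compat; lra).
  assert (HL : 0 < L) by lra.
  assert (HeK : eps * K = d + 1) by (unfold K; field; lra).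
  assert (HeL : d + 1 <= eps * L) by (rewrite <- HeK; apply Rmult_le_compat_l; lra).
  assert (Hvv : (d - eps) * L <= v).
  { rewrite <- Hd in Hv. assert (d * L <= d * (l + 1)) by (apply Rmult_le_compat_l; lra). nra. }
  apply Rle_ge. replace (d - eps) with ((d - eps) * L / L) by (field; lra).
  unfold Rdiv. apply Rmult_le_compat_r; [left; apply Rinv_0_lt_compat; lra|exact Hvv].
Qed.
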